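(* Let $b>a>0$ and $t>0$. For any measurable $f:[0,t]\to\mathbb{R}_+$, $$\int_0^t\frac{ds}{(s+f(s))^{1+a}}\le\kappa(a,b)\Big(\int_0^t\frac{ds}{(s+f(s))^{1+b}}\Big)^{a/b},\qquad \kappa(a,b)=\frac{a+1}{a}\Big[\frac{b}{b+1}\Big]^{a/b}.$$ *)

(* Defs.v *)
From HB Require Import structures.
From mathcomp Require Import all_boot all_order all_algebra.
From mathcomp Require Import all_classical all_reals all_analysis.
Set Implicit Arguments. Unset Strict Implicit. Unset Printing Implicit Defensive.
Import Order.TTheory GRing.Theory Num.Theory.
Local Open Scope ring_scope.

Definition kappa {R : realType} (a b : R) : R :=
  (a + 1) / a * powR (b / (b + 1)) (a / b).

(* Main.v *)
Require Import Defs.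
From HB Require Import structures.
From mathcomp Require Import all_boot all_order all_algebra.
From mathcomp Require Import all_classical all_reals all_analysis.
From mathcomp Require Import measurable_realfun.
From mathcomp Require Import ring lra.
Import Order.TTheory GRing.Theory Num.Theory.
Local Open Scope classical_set_scope.
Local Open Scope ring_scope.
Import numFieldNormedType.Exports.

Lemma amgm (R : realType) (a b u : R) : 0 < a -> a < b -> 0 <= u ->
  (1 + b) * powR u (1 + a) <= (b - a) + (1 + a) * powR u (1 + b).
Proof.
move=> a0 ab u0.
have b0 : 0 < b by apply: lt_trans ab.
have [->|u0'] := eqVneq u 0.
  rewrite !powR0 ?mulr0 ?addr0 ?subr_ge0 ?ltW // gt_eqF // addr_gt0 //.
have up : 0 < u by rewrite lt_neqAle eq_sym u0' u0.
have t0 : 0 <= (1 + a) / (1 + b) by rewrite divr_ge0 // addr_ge0 // ltW.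
have t1 : (1 + a) / (1 + b) <= 1 by rewrite ler_pdivrMr ?mul1r ?lerD2l ?ltW // addr_gt0.
have := @concave_ln R (Itv01 t0 t1) (powR u (1 + b)) 1 (powR_gt0 _ up) ltr01.
rewrite !convRE /= ln1 mulr0 addr0 ln_powR mulrA divfK ?gt_eqF ?addr_gt0 //.
have t1' : (1 + a) / (1 + b) < 1 by rewrite ltr_pdivrMr ?mul1r ?ltrD2l // addr_gt0.
have q0 : 0 < (1 + a) / (1 + b) * u `^ (1 + b) + unstable.onem ((1 + a) / (1 + b)) * 1.
  rewrite mulr1; apply: (@lt_le_trans _ _ (unstable.onem ((1 + a) / (1 + b)))).
    by rewrite /unstable.onem subr_gt0.
  by rewrite lerDr mulr_ge0 // powR_ge0.
rewrite -ln_powR ler_ln ?posrE ?powR_gt0 // => H.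
apply: (le_trans (ler_wpM2l (ltW (addr_gt0 ltr01 b0)) H)).
rewrite /unstable.onem; set P := u `^ (1 + b).
have hb : 1 + b != 0 by rewrite gt_eqF // addr_gt0.
rewrite le_eqVlt; apply/orP; left; apply/eqP; field; exact: hb.
Qed.

Section S.
Context {R : realType}.
Implicit Types a b c s x : R.

Lemma powRV x r : 0 <= x -> powR (x^-1) r = (powR x r)^-1.
Proof.
move=> x0; have [->|xn0] := eqVneq x 0.
  by rewrite invr0; have [->|r0] := eqVneq r 0; rewrite ?powRr0 ?invr1 // powR0 // invr0.
have xp : 0 < x by rewrite lt_neqAle eq_sym xn0.
apply: (@mulfI _ (powR x r)); first by rewrite gt_eqF // powR_gt0.
by rewrite -powRM ?invr_ge0 // divff // powR1 divff // gt_eqF // powR_gt0.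
Qed.

Lemma powR_scale x c r : 0 < x -> 0 < c ->
  (powR x r)^-1 = (powR c r)^-1 * powR (c / x) r.
Proof.
move=> x0 c0; rewrite powRM ?invr_ge0 ?ltW // powRV ?ltW // mulrA mulVf ?mul1r //.
by rewrite gt_eqF // powR_gt0.
Qed.

Definition lam a b c := (1 + a) / (1 + b) * powR c (b - a).
Definition phi a b c s := if s <= c then (powR c (1 + a))^-1 * ((b - a) / (1 + b))
  else (powR s (1 + a))^-1 - lam a b c * (powR s (1 + b))^-1.

Lemma lam_le a b c s : 0 < a -> a < b -> 0 < c -> c <= s ->
  lam a b c * (powR s (1 + b))^-1 <= (1 + a) / (1 + b) * (powR s (1 + a))^-1.
Proof.
move=> a0 ab c0 cs; have s0 : 0 < s by apply: lt_le_trans cs.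
have b0 : 0 < b by apply: lt_trans ab.
rewrite /lam -mulrA; apply: ler_wpM2l; first by rewrite divr_ge0 ?addr_ge0 ?ltW.
have -> : (powR s (1 + a))^-1 = powR s (b - a) * (powR s (1 + b))^-1.
  have e : 1 + b = (b - a) + (1 + a) by ring.
  rewrite [in RHS]e (@powRD _ s (b - a) (1 + a)) ?(gt_eqF s0) ?implybT //.
  by rewrite invfM mulrA divff ?mul1r // gt_eqF // powR_gt0.
apply: ler_wpM2r; first by rewrite invr_ge0 powR_ge0.
apply: (@ge0_ler_powR R (b - a)) cs; rewrite ?nnegrE ?subr_ge0 ?ltW //.
Qed.

Lemma phi_ge0 a b c s : 0 < a -> a < b -> 0 < c -> 0 <= phi a b c s.
Proof.
move=> a0 ab c0; rewrite /phi; case: ifPn => cs.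
  by rewrite mulr_ge0 ?invr_ge0 ?powR_ge0 ?divr_ge0 ?subr_ge0 ?addr_ge0 ?ltW // (lt_trans a0).
rewrite -ltNge in cs; rewrite subr_ge0.
have H := lam_le a b c s a0 ab c0 (ltW cs).
apply: le_trans H _.
rewrite ler_piMl ?invr_ge0 ?powR_ge0 // ler_pdivrMr ?mul1r ?lerD2l ?ltW //.
by rewrite addr_gt0 // (lt_trans a0).
Qed.


Lemma powR_ba a b s : 0 < s ->
  powR s (b - a) * (powR s (1 + b))^-1 = (powR s (1 + a))^-1.
Proof.
move=> s0; have e : 1 + b = (b - a) + (1 + a) by ring.
rewrite e (@powRD _ s (b - a) (1 + a)) ?(gt_eqF s0) ?implybT //.
by rewrite invfM mulrA divff ?mul1r // gt_eqF // powR_gt0.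
Qed.

Lemma pointwise a b c s x : 0 < a -> a < b -> 0 < c -> 0 <= s -> s <= x ->
  (powR x (1 + a))^-1 <= lam a b c * (powR x (1 + b))^-1 + phi a b c s.
Proof.
move=> a0 ab c0 s0 sx.
have b0 : 0 < b by apply: lt_trans ab.
have hb : 0 < 1 + b by rewrite addr_gt0.
have lam0 : 0 <= lam a b c by rewrite /lam mulr_ge0 ?divr_ge0 ?powR_ge0 ?addr_ge0 ?ltW.
have [x0|xp] := eqVneq x 0.
  rewrite x0 powR0 ?invr0; last by rewrite gt_eqF // addr_gt0.
  by rewrite addr_ge0 ?phi_ge0 // mulr_ge0 // invr_ge0 powR_ge0.
have xp' : 0 < x by rewrite lt_neqAle eq_sym xp (le_trans s0 sx).
rewrite /phi; case: ifPn => cs.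
  rewrite (powR_scale x c (1 + a) xp' c0) (powR_scale x c (1 + b) xp' c0).
  have u0 : 0 <= c / x by rewrite divr_ge0 ?ltW.
  have Y := @amgm R a b _ a0 ab u0.
  set T := (1 + a) / (1 + b).
  have e : lam a b c * (powR c (1 + b))^-1 = T * (powR c (1 + a))^-1.
    by rewrite /lam -mulrA powR_ba.
  rewrite mulrA e.
  set K := (powR c (1 + a))^-1; set U := powR (c / x) (1 + a).
  set V := powR (c / x) (1 + b).
  have K0 : 0 <= K by rewrite invr_ge0 powR_ge0.
  have Y' : U <= T * V + (b - a) / (1 + b).
    rewrite -(ler_pM2l hb).
    have -> : (1 + b) * (T * V + (b - a) / (1 + b)) = (b - a) + (1 + a) * V.
      by rewrite /T; field; rewrite gt_eqF.
    exact: Y.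
  have := ler_wpM2l K0 Y'.
  rewrite mulrDr mulrCA mulrA.
  done.
rewrite -ltNge in cs.
have sp : 0 < s by apply: lt_trans cs.
rewrite (powR_scale x s (1 + a) xp' sp) (powR_scale x s (1 + b) xp' sp).
have u0 : 0 <= s / x by rewrite divr_ge0 ?ltW.
have Y := @amgm R a b _ a0 ab u0.
have L1 := lam_le a b c s a0 ab c0 (ltW cs).
set Ks := (powR s (1 + a))^-1 in L1 *; set Kb := (powR s (1 + b))^-1 in L1 *.
set U := powR (s / x) (1 + a) in Y *; set V := powR (s / x) (1 + b) in Y *.
have V1 : V <= 1.
  have u1 : s / x <= 1 by rewrite ler_pdivrMr ?mul1r.
  have h : V <= s / x.
    by apply: ge1r_powR; [rewrite u1 andbT divr_gt0 | rewrite lerDl ltW].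
  exact: le_trans h u1.
have Ks0 : 0 <= Ks by rewrite invr_ge0 powR_ge0.
set T := (1 + a) / (1 + b) in L1.
have h1 : lam a b c * Kb * (1 - V) <= T * Ks * (1 - V).
  by apply: ler_wpM2r; rewrite ?subr_ge0.
have h3 : T * (1 - V) <= 1 - U.
  rewrite -(ler_pM2l hb).
  have -> : (1 + b) * (T * (1 - V)) = (1 + a) * (1 - V) by rewrite /T; field; rewrite gt_eqF.
  lra.
have h2 : T * Ks * (1 - V) <= Ks * (1 - U).
  by rewrite [T * Ks]mulrC -mulrA; apply: ler_wpM2l.
have : lam a b c * Kb * (1 - V) <= Ks * (1 - U) by apply: le_trans h2.
set L := lam a b c * Kb.
rewrite mulrA -/L.
move=> H; lra.
Qed.

End S.

Section S2.
Context {R : realType}.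
Implicit Types a b c s x t T : R.

Definition psi a b c s := powR s (- (1 + a)) - lam a b c * powR s (- (1 + b)).
Definition Gf a b c : R -> R := (- a^-1) \*: (fun s => powR s (- a)) + (lam a b c / b) \*: (fun s => powR s (- b)).

Lemma Gf_derive a b c x : 0 < a -> 0 < b -> 0 < x -> is_derive x 1 (Gf a b c) (psi a b c x).
Proof.
move=> a0 b0 x0; rewrite /Gf.
apply: is_derive_eq.
  apply: is_deriveD; apply: is_deriveZ; exact: is_derive1_powR.
rewrite /psi /=.
change (- a^-1 * (- a * powR x (- a - 1)) + lam a b c / b * (- b * powR x (- b - 1)) = powR x (- (1 + a)) - lam a b c * powR x (- (1 + b))).
have -> : - a - 1 = - (1 + a) by ring.
have -> : - b - 1 = - (1 + b) by ring.
by field; rewrite ?gt_eqF.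
Qed.


Lemma Gf_cont a b c (y : R) : 0 < a -> 0 < b -> 0 < y -> {for y, continuous (Gf a b c)}.
Proof.
move=> a0 b0 x0; apply/differentiable_continuous; rewrite -derivable1_diffP.
by apply: ex_derive; exact: Gf_derive.
Qed.

Lemma powR_cont r (y : R) : 0 < y -> {for y, continuous (fun s : R => powR s r)}.
Proof.
move=> x0; apply/differentiable_continuous; rewrite -derivable1_diffP.
by apply: ex_derive; exact: is_derive1_powR.
Qed.

Lemma int_psi a b c T : 0 < a -> a < b -> 0 < c -> c < T ->
  (\int[lebesgue_measure]_(x in `[c, T]) (psi a b c x)%:E =
    (Gf a b c T)%:E - (Gf a b c c)%:E)%E.
Proof.
move=> a0 ab c0 cT; have b0 : 0 < b by apply: lt_trans ab.
apply: continuous_FTC2 => //.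
- apply: continuous_in_subspaceT => s; rewrite inE /= in_itv /= => /andP[cs _].
  have s0 : 0 < s by apply: lt_le_trans cs.
  apply: cvgB; first exact: powR_cont.
  apply: cvgM; first exact: cvg_cst.
  exact: powR_cont.
- split.
  + move=> s; rewrite in_itv /= => /andP[cs _].
    by apply: ex_derive; apply: Gf_derive => //; apply: lt_trans cs.
  + by apply: cvg_at_right_filter; apply: Gf_cont.
  + by apply: cvg_at_left_filter; apply: Gf_cont => //; apply: lt_trans cT.
- move=> s; rewrite in_itv /= => /andP[cs _].
  by rewrite derive1E; apply: derive_val; apply: Gf_derive => //; apply: lt_trans cs.
Qed.


Definition Mc a b c := (powR c (1 + a))^-1 * ((b - a) / (1 + b)).

Lemma phiE a b c : phi a b c = fun s => if s <= c then Mc a b c else psi a b c s.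
Proof. by apply/funext => s; rewrite /phi /psi !powRN. Qed.

Lemma mphi a b c : measurable_fun setT (phi a b c).
Proof.
rewrite phiE; apply: measurable_fun_ifT.
- by apply: measurable_realfun.measurable_fun_ler => //; exact: measurable_cst.
- exact: measurable_cst.
- rewrite /psi; apply: measurable_realfun.measurable_funB; first exact: measurable_realfun.measurable_powR.
  by apply: measurable_realfun.measurable_funM; [exact: measurable_cst | exact: measurable_realfun.measurable_powR].
Qed.

Lemma Gf_le0 a b c T : 0 < a -> a < b -> 0 < c -> c <= T -> Gf a b c T <= 0.
Proof.
move=> a0 ab c0 cT; have b0 : 0 < b by apply: lt_trans ab.
have T0 : 0 < T by apply: lt_le_trans cT.
rewrite /Gf /=.
change (- a^-1 * powR T (- a) + lam a b c / b * powR T (- b) <= 0).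
have L : lam a b c * powR T (- b) <= (1 + a) / (1 + b) * powR T (- a).
  rewrite /lam -mulrA; apply: ler_wpM2l; first by rewrite divr_ge0 ?addr_ge0 ?ltW.
  have -> : powR T (- a) = powR T (b - a) * powR T (- b).
    by rewrite -powRD ?(gt_eqF T0) ?implybT //; congr powR; ring.
  apply: ler_wpM2r; first exact: powR_ge0.
  by apply: (@ge0_ler_powR R (b - a)) cT; rewrite ?nnegrE ?subr_ge0 ?ltW.
have P0 : 0 <= powR T (- a) := powR_ge0 _ _.
have th : (1 + a) / (1 + b) / b <= a^-1.
  rewrite -subr_ge0.
  have -> : a^-1 - (1 + a) / (1 + b) / b = ((1 + b) * b - a * (1 + a)) / (a * (1 + b) * b).
    by field; rewrite ?gt_eqF ?addr_gt0.
  apply: divr_ge0; first nra.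
  by rewrite !mulr_ge0 ?addr_ge0 ?ltW.
have h1 : lam a b c / b * powR T (- b) = (lam a b c * powR T (- b)) / b by rewrite mulrAC.
have h2 : (lam a b c * powR T (- b)) / b <= ((1 + a) / (1 + b) * powR T (- a)) / b.
  by apply: ler_wpM2r => //; rewrite invr_ge0 ltW.
have h3 : ((1 + a) / (1 + b) * powR T (- a)) / b = ((1 + a) / (1 + b) / b) * powR T (- a).
  by rewrite mulrAC.
have h4 := ler_wpM2r P0 th.
lra.
Qed.


Lemma int_phi a b c t : 0 < a -> a < b -> 0 < c -> 0 < t ->
  (\int[lebesgue_measure]_(x in `[0%R, t]) (phi a b c x)%:E
     <= (c * Mc a b c - Gf a b c c)%:E)%E.
Proof.
move=> a0 ab c0 t0.
set T := t + c.
have cT : c < T by rewrite /T ltrDr.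
have mE : measurable_fun [set: R] (fun x => (phi a b c x)%:E) by apply/measurable_EFinP; exact: mphi.
have sub : (\int[lebesgue_measure]_(x in `[0%R, t]) (phi a b c x)%:E <=
    \int[lebesgue_measure]_(x in `[0%R, T]) (phi a b c x)%:E)%E.
  apply: ge0_subset_integral => //.
  - exact: measurable_funS mE.
  - by move=> x _; rewrite lee_fin phi_ge0.
  - by apply: subset_itv; rewrite bnd_simp // lerDl ltW.
apply: le_trans sub _.
rewrite (@itv_bndbnd_setU _ _ _ (BRight c)); last 2 first.
  by rewrite bnd_simp ltW.
  by rewrite bnd_simp ltW.
rewrite integral_setU //=; last 2 first.
  exact: measurable_funS mE.
  apply/disj_setPRL => z /=; rewrite !in_itv /= => /andP[cz _] /andP[_ zc].
  by move: (lt_le_trans cz zc); rewrite ltxx.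
have mpsi : measurable_fun [set: R] (fun x => (psi a b c x)%:E).
  apply/measurable_EFinP; rewrite /psi; apply: measurable_realfun.measurable_funB.
    exact: measurable_realfun.measurable_powR.
  apply: measurable_realfun.measurable_funM; first exact: measurable_cst.
  exact: measurable_realfun.measurable_powR.
have e1 : (\int[lebesgue_measure]_(x in `[0%R, c]) (phi a b c x)%:E = (Mc a b c * c)%:E)%E.
  transitivity (\int[lebesgue_measure]_(x in `[0%R, c]) (cst (Mc a b c)%:E x))%E.
    by apply: eq_integral => x; rewrite inE /= in_itv /= => /andP[_ xc]; rewrite /phi xc.
  rewrite integral_cst //= lebesgue_measure_itv /= lte_fin c0.
  by rewrite oppr0 -EFinD addr0 -EFinM.
have e2 : (\int[lebesgue_measure]_(x in `]c, T]) (phi a b c x)%:E =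
    \int[lebesgue_measure]_(x in `]c, T]) (psi a b c x)%:E)%E.
  apply: eq_integral => x; rewrite inE /= in_itv /= => /andP[cx _].
  by rewrite /phi leNgt cx /= /psi !powRN.
rewrite e1 e2 integral_itv_obnd_cbnd; last exact: measurable_funS mpsi.
rewrite int_psi // -!EFinD lee_fin.
have := Gf_le0 a b c T a0 ab c0 (ltW cT).
lra.
Qed.

End S2.
Section S3.
Context {R : realType}.
Implicit Types a b c s x t T : R.

Lemma cMc a b c : 0 < c -> c * Mc a b c = powR c (- a) * ((b - a) / (1 + b)).
Proof.
move=> c0.
have e : c * (powR c (1 + a))^-1 = powR c (- a).
  rewrite -powRN -{1}(powRr1 (ltW c0)) -powRD; last by rewrite (gt_eqF c0) implybT.
  by congr powR; ring.
by rewrite /Mc !mulrA e.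
Qed.

Lemma powR_ba' a b c : 0 < c -> powR c (b - a) * powR c (- b) = powR c (- a).
Proof.
move=> c0; rewrite -powRD; last by rewrite (gt_eqF c0) implybT.
by congr powR; ring.
Qed.

Lemma GfE a b c : 0 < c ->
  Gf a b c c = - a^-1 * powR c (- a) + (1 + a) / (1 + b) / b * powR c (- a).
Proof.
move=> c0; rewrite /Gf /=.
change (- a^-1 * powR c (- a) + lam a b c / b * powR c (- b) =
  - a^-1 * powR c (- a) + (1 + a) / (1 + b) / b * powR c (- a)).
congr (_ + _); rewrite /lam -(powR_ba' a b c c0) mulrAC -!mulrA; congr (_ * _).
ring.
Qed.


Lemma mA t (f : R -> R) p : measurable_fun `[0%R, t] f ->
  measurable_fun `[0%R, t] (fun s => (powR (s + f s) p)^-1).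
Proof.
move=> mf.
rewrite (_ : (fun s => _) = (fun s => powR (s + f s) (- p))); last first.
  by apply/funext => s; rewrite powRN.
apply: (measurableT_comp (measurable_powR _)).
by apply: measurable_funD => //; exact: measurable_id.
Qed.

Lemma key a b t (f : R -> R) c : 0 < a -> a < b -> 0 < t -> 0 < c ->
  measurable_fun `[0%R, t] f -> (forall s, s \in `[0%R, t] -> 0 <= f s) ->
  (\int[lebesgue_measure]_(s in `[0%R, t]) ((powR (s + f s) (1 + a))^-1)%:E
   <= (lam a b c)%:E * \int[lebesgue_measure]_(s in `[0%R, t]) ((powR (s + f s) (1 + b))^-1)%:E
      + (c * Mc a b c - Gf a b c c)%:E)%E.
Proof.
move=> a0 ab t0 c0 mf f0; have b0 : 0 < b by apply: lt_trans ab.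
have lam0 : 0 <= lam a b c by rewrite /lam mulr_ge0 ?divr_ge0 ?powR_ge0 ?addr_ge0 ?ltW.
have mB := mA _ _ (1 + b) mf.
have mphi : measurable_fun `[0%R, t] (phi a b c) by apply: measurable_funS (mphi a b c).
have le1 : (\int[lebesgue_measure]_(s in `[0%R, t]) ((powR (s + f s) (1 + a))^-1)%:E
   <= \int[lebesgue_measure]_(s in `[0%R, t]) (lam a b c * (powR (s + f s) (1 + b))^-1 + phi a b c s)%:E)%E.
  apply: ge0_le_integral => //.
  - by move=> s _; rewrite lee_fin invr_ge0 powR_ge0.
  - by apply/measurable_EFinP; exact: mA.
  - apply/measurable_EFinP; apply: measurable_funD => //.
    by apply: measurable_funM => //; exact: measurable_cst.
  - move=> s Ds; rewrite lee_fin; apply: pointwise => //.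
      by move: Ds; rewrite /= in_itv /= => /andP[].
    by rewrite lerDl f0 // inE.
apply: le_trans le1 _.
rewrite (_ : (fun s => _) = (fun s => (lam a b c)%:E * ((powR (s + f s) (1 + b))^-1)%:E + (phi a b c s)%:E)%E); last first.
  by apply/funext => s; rewrite EFinD EFinM.
rewrite ge0_integralD //; first last.
- by apply/measurable_EFinP.
- by move=> s _; rewrite lee_fin phi_ge0.
- apply: emeasurable_funM => //.
  by apply/measurable_EFinP.
- by move=> s _; rewrite mule_ge0 // lee_fin invr_ge0 powR_ge0.
rewrite ge0_integralZl_EFin //; first last.
- by apply/measurable_EFinP.
- by move=> s _; rewrite lee_fin invr_ge0 powR_ge0.
apply: leeD2l.
exact: (int_phi a b c t a0 ab c0 t0).
Qed.

End S3.

Theorem lemma1p3 (R : realType) (a b t : R) (f : R -> R)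
  (ha : 0 < a) (hab : a < b) (ht : 0 < t)
  (mf : measurable_fun `[0%R, t] f)
  (f0 : forall s, s \in `[0%R, t] -> 0 <= f s) :
  (\int[lebesgue_measure]_(s in `[0%R, t]) ((powR (s + f s) (1 + a))^-1)%:E
   <= (kappa a b)%:E *
      poweR (\int[lebesgue_measure]_(s in `[0%R, t]) ((powR (s + f s) (1 + b))^-1)%:E)
            (a / b))%E.
Proof.
have b0 : 0 < b by apply: lt_trans hab.
have ab0 : a / b != 0 by rewrite gt_eqF // divr_gt0.
have kap0 : 0 < kappa a b.
  by rewrite /kappa mulr_gt0 ?divr_gt0 ?addr_gt0 // powR_gt0 // divr_gt0 ?addr_gt0.
have K := fun c (c0 : 0 < c) => key a b t f c ha hab ht c0 mf f0.
move: K.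
set IB := (\int[lebesgue_measure]_(s in `[0%R, t]) ((powR (s + f s) (1 + b))^-1)%:E)%E.
have IB0 : (0 <= IB)%E by apply: integral_ge0 => s _; rewrite lee_fin invr_ge0 powR_ge0.
case Eb : IB IB0 => [ib| |] IB0 K.
- have ib0 : 0 <= ib by rewrite -lee_fin.
  have hb : 0 < 1 + b by rewrite addr_gt0.
  set T := (1 + a) / (1 + b) / b.
  have th : T < a^-1.
    rewrite -subr_gt0.
    have -> : a^-1 - T = ((1 + b) * b - a * (1 + a)) / (a * (1 + b) * b).
      by rewrite /T; field; rewrite ?gt_eqF ?addr_gt0.
    apply: divr_gt0; first nra.
    by rewrite !mulr_gt0 ?addr_gt0.
  rewrite poweR_EFin -EFinM.
  have [ibz|ibp] := eqVneq ib 0.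
  + rewrite ibz powR0 // mulr0.
    apply/lee_addgt0Pr => e e0; rewrite add0e.
    set K0 := (b - a) / (1 + b) + a^-1 - T.
    have K0p : 0 < K0.
      rewrite /K0 -addrA addr_gt0 ?subr_gt0 // divr_gt0 // subr_gt0 //.
    set c := powR (e / K0) (- a^-1).
    have c0 : 0 < c by rewrite powR_gt0 // divr_gt0.
    have Pa : powR c (- a) = e / K0.
      rewrite /c -powRrM mulrNN mulVf; last by rewrite gt_eqF.
      by rewrite powRr1 //; apply: ltW; apply: divr_gt0.
    apply: le_trans (K c c0) _.
    rewrite ibz mule0 add0e lee_fin cMc // GfE // Pa -/T.
    rewrite le_eqVlt; apply/orP; left; apply/eqP.
    have -> : e / K0 * ((b - a) / (1 + b)) - (- a^-1 * (e / K0) + T * (e / K0)) = e / K0 * K0.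
      by rewrite /K0; ring.
    by rewrite divfK // gt_eqF.
  + have ibp' : 0 < ib by rewrite lt_neqAle eq_sym ibp.
    set q := b * ib / (b + 1).
    have q0 : 0 < q by rewrite /q divr_gt0 ?mulr_gt0 ?addr_gt0.
    set c := powR q (- b^-1).
    have c0 : 0 < c by rewrite powR_gt0.
    have Q : powR c (- b) = q.
      rewrite /c -powRrM mulrNN mulVf; last by rewrite gt_eqF.
      by rewrite powRr1 //; apply: ltW.
    have P : powR c (- a) = powR q (a / b).
      by rewrite /c -powRrM; congr powR; field; rewrite gt_eqF.
    have hib : ib = (b + 1) / b * powR c (- b).
      by rewrite Q /q; field; rewrite ?gt_eqF ?addr_gt0.
    have e : lam a b c * ib = (1 + a) / b * powR c (- a).
      rewrite /lam hib -(powR_ba' a b c c0).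
      by field; rewrite ?gt_eqF ?addr_gt0.
    apply: le_trans (K c c0) _.
    rewrite -EFinM -EFinD lee_fin e cMc // GfE // P -/T.
    have -> : kappa a b * powR ib (a / b) = (a + 1) / a * powR q (a / b).
      rewrite /kappa -mulrA -powRM ?divr_ge0 ?addr_ge0 ?ltW //.
      by congr (_ * powR _ _); rewrite /q mulrAC.
    rewrite le_eqVlt; apply/orP; left; apply/eqP.
    rewrite /T; field.
    by rewrite ?gt_eqF ?addr_gt0.
- by rewrite poweRyr // gt0_muley ?lte_fin // leey.
- by [].
Qed.
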